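(* Let $(\Delta,R)$ be a gentle quiver with $f_{(\Delta,R)}=m\cdot[0,3]+[p+m+2,\,p]$ for some $m,p\in\mathbb N$, and let $\mathcal O_1,\dots,\mathcal O_{m'}$ be the pairwise different triangles in $(\Delta,R)$ (i.e. all of them). If $\alpha_i\in\mathcal O_i$ for each $i$ and $(\Delta',R'):=(\Delta,R)\setminus\{\alpha_i\mid i\in[1,m']\}$, then $(\Delta',R')$ is a gentle quiver of tree type, i.e. $|\Delta'_0|=|\Delta'_1|+1$.
   Context: A quiver $\Delta$ has finite vertex set $\Delta_0$, arrow set $\Delta_1$, maps $s,t$. A path of length $n\ge1$ is $(\alpha_1,\dots,\alpha_n)$ with $s\alpha_i=t\alpha_{i+1}$. A gentle quiver is $(\Delta,R)$ with $\Delta$ connected, $R$ a set of paths of length 2, such that: (1) each vertex is start of at most two arrows and end of at most two arrows; (2) for each arrow $\alpha$ at most one $\beta$ with $s\beta=t\alpha$, $(\beta,\alpha)\notin R$ and at most one $\gamma$ with $t\gamma=s\alpha$, $(\alpha,\gamma)\notin R$; (3) for each $\alpha$ at most one $\beta$ with $(\beta,\alpha)\in R$ and at most one $\gamma$ with $(\alpha,\gamma)\in R$; (4) for some $n$ every path of length $n$ has a subpath in $R$. Invariant: fix $\sigma,\tau:\Delta_1\to\{\pm1\}$ with distinct arrows of same start having opposite $\sigma$, distinct arrows of same end opposite $\tau$, and for $s\alpha=t\beta$: $(\alpha,\beta)\in R$ iff $\sigma\alpha=\tau\beta$; $\sigma\omega=\sigma\alpha_n,\tau\omega=\tau\alpha_1$.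 Permitted paths: no consecutive pair in $R$, plus trivial $1_{x,\varepsilon}$ ($s=t=x$, $\sigma=\varepsilon,\tau=-\varepsilon$); maximal if no arrow $\alpha$ with $s\alpha=t\omega,\sigma\alpha=-\tau\omega$ and no $\beta$ with $t\beta=s\omega,\tau\beta=-\sigma\omega$; set $\mathcal M$. Antipaths: all consecutive pairs in $R$, plus trivial $1'_{x,\varepsilon}$ ($\sigma=\tau=\varepsilon$); maximal if no $\alpha$ with $s\alpha=t\omega,\sigma\alpha=\tau\omega$ and no $\beta$ with $t\beta=s\omega,\tau\beta=\sigma\omega$; set $\mathcal N$. $\phi:\mathcal M\to\mathcal N$, $\omega\mapsto$ unique $\omega'$ with $t\omega'=t\omega,\tau\omega'=-\tau\omega$; $\psi:\mathcal N\to\mathcal M$, $\omega\mapsto$ unique $\omega'$ with $s\omega'=s\omega,\sigma\omega'=-\sigma\omega$; $\Phi=\phi\psi$; $\Phi$-orbit: $p=|\mathcal O|$, $q=$ total length. $\mathcal C$: arrows $\alpha$ with $(\alpha)$ not a subpath of a maximal antipath; $\Psi(\alpha)=$ unique $\beta\in\mathcal C$ with $t\beta=s\alpha,\tau\beta=\sigma\alpha$; $\Psi$-orbit: $p=0$, $q=|\mathcal O|$. $f(p,q)=$ number of orbits with these values; $[p,q]$ the characteristic function of $\{(p,q)\}$. A triangle is a $\Psi$-orbit with exactly 3 elements. For $\Delta_1'\subset\Delta_1$, $(\Delta,R)\setminus\Delta_1'$ has the same vertices, arrows $\Delta_1\setminus\Delta_1'$, and relations those $\rho\in R$ containing no arrow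 of $\Delta_1'$. *)

(* Defs.v *)
From Stdlib Require Import Relations.Relation_Operators.
From HB Require Import structures.
From mathcomp Require Import all_boot.

Set Implicit Arguments.
Unset Strict Implicit.
Unset Printing Implicit Defensive.

(* A quiver with finite vertex set qV, finite arrow set qA, source/target maps,
   and a set of length-2 paths qR : qR a b means the path (a,b) (i.e. s a = t b,
   a applied after b, composition right-to-left as in the paper) lies in R. *)
Record quiver := Quiver {
  qV : finType; qA : finType;
  qs : qA -> qV; qt : qA -> qV;
  qR : rel qA }.

Definition is_qpath (Q : quiver) (w : seq (qA Q)) : bool :=
  (w != [::]) && sorted (fun a b => qs a == qt b) w.

Definition qadj (Q : quiver) : rel (qV Q) := fun u v =>
  [exists a, ((qs a == u) && (qt a == v)) || ((qs a == v) && (qt a == u))].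

Definition qconnected (Q : quiver) : Prop :=
  forall x y : qV Q, connect (@qadj Q) x y.

Definition gentle (Q : quiver) : Prop :=
  qconnected Q /\
  [/\
      (forall a b : qA Q, qR a b -> qs a = qt b),
      (forall x : qV Q, #|[set a | qs a == x]| <= 2 /\ #|[set a | qt a == x]| <= 2),
      (forall a : qA Q, #|[set b | (qs b == qt a) && ~~ qR b a]| <= 1 /\
                        #|[set c | (qt c == qs a) && ~~ qR a c]| <= 1),
      (forall a : qA Q, #|[set b | qR b a]| <= 1 /\ #|[set c | qR a c]| <= 1) &
      exists n, 0 < n /\ forall w : seq (qA Q), is_qpath w -> size w = n ->
        exists w1 a b w2, w = w1 ++ a :: b :: w2 /\ qR a b].

(* sign functions sigma, tau : arrows -> {+1,-1}, with +1 = true, -1 = false *)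
Definition valid_signs (Q : quiver) (sg ta : qA Q -> bool) : Prop :=
  [/\ (forall a b, a != b -> qs a = qs b -> sg a != sg b),
      (forall a b, a != b -> qt a = qt b -> ta a != ta b) &
      (forall a b, qs a = qt b -> (qR a b <-> sg a = ta b))].

(* Candidate (anti)paths: inl (x, e) is the trivial path at x with sign e
   (1_{x,e} for permitted paths, 1'_{x,e} for antipaths);
   inr (a, w) is the nontrivial sequence a :: w = (a1,...,an). *)
Notation qpath Q := ((qV Q * bool) + (qA Q * seq (qA Q)))%type.

Section PathData.
Variable Q : quiver.
Variables sg ta : qA Q -> bool.

Definition parrows (p : qpath Q) : seq (qA Q) :=
  match p with inl _ => [::] | inr (a, w) => a :: w end.
Definition psrc (p : qpath Q) : qV Q :=
  match p with inl (x, _) => x | inr (a, w) => qs (last a w) end.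
Definition ptgt (p : qpath Q) : qV Q :=
  match p with inl (x, _) => x | inr (a, _) => qt a end.
Definition plen (p : qpath Q) : nat :=
  match p with inl _ => 0 | inr (_, w) => (size w).+1 end.
Definition psig (p : qpath Q) : bool :=
  match p with inl (_, e) => e | inr (a, w) => sg (last a w) end.
Definition ptauM (p : qpath Q) : bool :=
  match p with inl (_, e) => ~~ e | inr (a, _) => ta a end.
Definition ptauN (p : qpath Q) : bool :=
  match p with inl (_, e) => e | inr (a, _) => ta a end.

Definition isPermitted (p : qpath Q) : bool :=
  match p with
  | inl _ => true
  | inr (a, w) => path (fun x y => (qs x == qt y) && ~~ qR x y) a w
  end.
Definition isAnti (p : qpath Q) : bool :=
  match p with
  | inl _ => true
  | inr (a, w) => path (fun x y => (qs x == qt y) && qR x y) a w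
  end.

Definition isM (p : qpath Q) : bool :=
  [&& isPermitted p,
      ~~ [exists a, (qs a == ptgt p) && (sg a == ~~ ptauM p)] &
      ~~ [exists b, (qt b == psrc p) && (ta b == ~~ psig p)]].
Definition isN (p : qpath Q) : bool :=
  [&& isAnti p,
      ~~ [exists a, (qs a == ptgt p) && (sg a == ptauN p)] &
      ~~ [exists b, (qt b == psrc p) && (ta b == psig p)]].

(* graphs of phi : M -> N, psi : N -> M and Phi = phi o psi : N -> N *)
Definition phiR (p p' : qpath Q) : Prop :=
  isM p /\ isN p' /\ ptgt p' = ptgt p /\ ptauN p' = ~~ ptauM p.
Definition psiR (p p' : qpath Q) : Prop :=
  isN p /\ isM p' /\ psrc p' = psrc p /\ psig p' = ~~ psig p.
Definition PhiR (p p'' : qpath Q) : Prop :=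
  exists p', psiR p p' /\ phiR p' p''.

Definition PhiOrb (p : qpath Q) : qpath Q -> Prop := clos_refl_trans _ PhiR p.

Definition inC (a : qA Q) : Prop := ~ exists p, isN p /\ a \in parrows p.
Definition PsiR (a b : qA Q) : Prop :=
  inC a /\ inC b /\ qt b = qs a /\ ta b = sg a.
Definition PsiOrb (a : qA Q) : qA Q -> Prop := clos_refl_trans _ PsiR a.

End PathData.

Definition fin_enum (T : eqType) (P : T -> Prop) (s : seq T) : Prop :=
  uniq s /\ forall x, P x <-> x \in s.

(* representatives (minimal code in the orbit) of Phi-orbits with p = x, q = y *)
Definition PhiRep (Q : quiver) (sg ta : qA Q -> bool) (x y : nat) (p : qpath Q) : Prop :=
  isN sg ta p /\
  (forall p', PhiOrb sg ta p p' -> pickle p <= pickle p') /\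
  exists s, fin_enum (PhiOrb sg ta p) s /\ size s = x /\ sumn (map (@plen Q) s) = y.

(* representatives of Psi-orbits with p = 0 = x, q = |O| = y *)
Definition PsiRep (Q : quiver) (sg ta : qA Q -> bool) (x y : nat) (a : qA Q) : Prop :=
  x = 0 /\ inC sg ta a /\
  (forall b, PsiOrb sg ta a b -> pickle a <= pickle b) /\
  exists s, fin_enum (PsiOrb sg ta a) s /\ size s = y.

(* f_{(Delta,R)}(x,y) = n : n orbits (Phi- or Psi-) with values (x,y) *)
Definition f_is (Q : quiver) (sg ta : qA Q -> bool) (x y n : nat) : Prop :=
  exists n1 n2, n = n1 + n2 /\
    (exists s, fin_enum (PhiRep sg ta x y) s /\ size s = n1) /\
    (exists s, fin_enum (PsiRep sg ta x y) s /\ size s = n2).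

(* a lies in a triangle (a Psi-orbit with exactly 3 elements) *)
Definition in_triangle (Q : quiver) (sg ta : qA Q -> bool) (a : qA Q) : Prop :=
  inC sg ta a /\ exists s, fin_enum (PsiOrb sg ta a) s /\ size s = 3.

Definition triangle_selection (Q : quiver) (sg ta : qA Q -> bool) (D : {set qA Q}) : Prop :=
  (forall d, d \in D -> in_triangle sg ta d) /\
  (forall a, in_triangle sg ta a -> exists! d, d \in D /\ PsiOrb sg ta a d).

Definition qremove (Q : quiver) (D : {set qA Q}) : quiver :=
  @Quiver (qV Q) {a : qA Q | a \notin D}
          (fun a => qs (val a)) (fun a => qt (val a))
          (fun a b => qR (val a) (val b)).

(* Main.v *)
Require Import Defs.
From HB Require Import structures.
From mathcomp Require Import all_boot.
From mathcomp Require Import zify.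
From Stdlib Require Import Lia.
From Stdlib Require Import Relations.Relation_Operators Relations.Operators_Properties.
From Stdlib Require Import Classical ClassicalEpsilon.
Set Implicit Arguments.
Unset Strict Implicit.
Unset Printing Implicit Defensive.

Section Chains.
Variables (A S : finType) (o i : A -> S).
Hypotheses (injo : injective o) (inji : injective i).

Definition crel : rel A := fun x y => o x == i y.
Definition nopred (x : A) := [forall b, i b != o x].
Definition nosucc (x : A) := [forall b, o b != i x].

Lemma L1 x s1 s2 : path crel x s1 -> path crel x s2 ->
  nopred (last x s1) -> nopred (last x s2) -> s1 = s2.
Proof.
elim: s1 x s2 => [|y s1 IH] x [|z s2] //=.
- move=> _ /andP[/eqP h _] /forallP /(_ z) /negP; by rewrite h.
- move=> /andP[/eqP h _] _ _ /forallP /(_ y) /negP; by rewrite h.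
move=> /andP[/eqP h1 p1] /andP[/eqP h2 p2] n1 n2.
have yz : y = z by apply: inji; rewrite -h1 -h2.
subst z; congr (_ :: _); exact: IH p1 p2 n1 n2.
Qed.

Lemma L2 x w : path crel x w -> nopred (last x w) -> uniq (x :: w).
Proof.
elim: w x => [|y w IH] x // pw np.
have /= /andP[_ pyw] := pw.
have := IH y pyw np; rewrite /= => ->; rewrite andbT.
apply/negP=> xin.
case/splitPr: xin pw np => u v pw np.
have pv : path crel x v.
  by move: pw; rewrite cat_path /= => /andP[_ /andP[_ ->]].
move: np; rewrite last_cat /= => np.
have := L1 pw pv; rewrite last_cat /= => /(_ np np) /(congr1 size).
rewrite size_cat /=; lia.
Qed.

Lemma L2s s x0 : sorted crel s -> nopred (last x0 s) -> uniq s.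
Proof. by case: s => [|x w] //= ; exact: L2. Qed.

End Chains.

Lemma last_rev (T : Type) (x0 : T) s : last x0 (rev s) = head x0 s.
Proof. by case: s => //= a s; rewrite rev_cons last_rcons. Qed.

Lemma sorted_dual (A S : finType) (o i : A -> S) s :
  sorted (crel o i) s = sorted (crel i o) (rev s).
Proof.
rewrite rev_sorted; case: s => //= a s; apply: eq_path => x y.
by rewrite /crel eq_sym.
Qed.

Lemma L2d (A S : finType) (o i : A -> S) (injo : injective o)
  s x0 : sorted (crel o i) s -> nosucc o i (head x0 s) -> uniq s.
Proof.
rewrite sorted_dual -(rev_uniq s) -(last_rev x0 s) => h1 h2.
exact: (L2s injo h1 h2).
Qed.

Lemma L1d (A S : finType) (o i : A -> S) (injo : injective o)
  y u1 u2 : sorted (crel o i) (rcons u1 y) -> sorted (crel o i) (rcons u2 y) ->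
  nosucc o i (head y u1) -> nosucc o i (head y u2) -> u1 = u2.
Proof.
rewrite (sorted_dual o i (rcons u1 y)) (sorted_dual o i (rcons u2 y)) !rev_rcons /= -(last_rev y u1) -(last_rev y u2) => h1 h2 n1 n2.
have := L1 injo h1 h2 n1 n2.
by move/(congr1 rev); rewrite !revK.
Qed.

Lemma L3 (A S : finType) (o i : A -> S) (injo : injective o) (inji : injective i)
  x : nosucc o i x -> exists w, path (crel o i) x w /\ nopred o i (last x w).
Proof.
move=> nsx.
suff H : forall n w, #|A| - size w <= n -> path (crel o i) x w ->
  exists w', path (crel o i) x w' /\ nopred o i (last x w').
  by apply: (H #|A| [::]); rewrite ?subn0.
have step : forall w, path (crel o i) x w -> ~~ nopred o i (last x w) ->
  exists b, path (crel o i) x (rcons w b) /\ size w + 2 <= #|A|.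
  move=> w pw /forallPn [b]; rewrite negbK => /eqP hb.
  have pw1 : path (crel o i) x (rcons w b) by rewrite rcons_path pw /crel hb eqxx.
  have u1 : uniq (x :: rcons w b) by exact: (@L2d _ _ o i injo (x :: rcons w b) x pw1 nsx).
  have sz : size (x :: rcons w b) <= #|A| by rewrite -(card_uniqP u1) max_card.
  by exists b; split => //; move: sz; rewrite /= size_rcons; lia.
elim=> [|n IH] w hn pw.
  case: (boolP (nopred o i (last x w))) => [np|nnp]; first by exists w.
  have [b [_ sz]] := step w pw nnp; lia.
case: (boolP (nopred o i (last x w))) => [np|nnp]; first by exists w.
have [b [pb sz]] := step w pw nnp.
apply: (IH (rcons w b)) => //; rewrite size_rcons; lia.
Qed.

Lemma L3d (A S : finType) (o i : A -> S) (injo : injective o) (inji : injective i)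
  y : nopred o i y -> exists u, sorted (crel o i) (rcons u y) /\ nosucc o i (head y u).
Proof.
move=> h.
have [w [pw nw]] := L3 inji injo h.
exists (rev w); split.
  by rewrite sorted_dual rev_rcons revK.
by rewrite -(last_rev y (rev w)) revK.
Qed.

Lemma sorted_split (T : Type) (e : rel T) u c v :
  sorted e (u ++ c :: v) -> sorted e (rcons u c) /\ path e c v.
Proof.
case: u => [|h t] /=; first by move=> ->.
by rewrite cat_path rcons_path /= => /andP[-> /andP[-> ->]].
Qed.

Lemma sorted_rcons2 (T : Type) (e : rel T) u d b :
  sorted e (rcons (rcons u d) b) -> e d b.
Proof.
case: u => [|h t] /=; first by rewrite andbT.
by rewrite rcons_path last_rcons => /andP[_ ->].
Qed.

Lemma head_cat_cons (T : Type) (x0 c : T) u v : head x0 (u ++ c :: v) = head c u.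
Proof. by case: u. Qed.

Lemma head_belast (T : Type) (a : T) w : head (last a w) (belast a w) = a.
Proof. by case: w. Qed.

Section QP.
Variables (V A : finType) (o i : A -> (V * bool)%type).
Hypotheses (injo : injective o) (inji : injective i).

Definition qp := ((V * bool) + (A * seq A))%type.

Definition isMax (p : qp) : bool :=
  match p with
  | inl z => [forall b, o b != z] && [forall b, i b != z]
  | inr (a, w) => [&& path (crel o i) a w, nosucc o i a & nopred o i (last a w)]
  end.
Definition endsl (p : qp) : V * bool :=
  match p with inl z => z | inr (a, _) => i a end.
Definition startsl (p : qp) : V * bool :=
  match p with inl z => z | inr (a, w) => o (last a w) end.
Definition parr (p : qp) : seq A :=
  match p with inl _ => [::] | inr (a, w) => a :: w end.

Lemma Q1 p p' : isMax p -> isMax p' -> endsl p = endsl p' -> p = p'.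
Proof.
case: p => [z|[a w]]; case: p' => [z'|[a' w']] /=.
- by move=> _ _ ->.
- move=> /andP[_ /forallP /(_ a') /negP h] _ e; by case: h; rewrite e.
- move=> _ /andP[_ /forallP /(_ a) /negP h] e; by case: h; rewrite e.
move=> /and3P[p1 _ n1] /and3P[p2 _ n2] /inji e; subst a'.
by rewrite (L1 inji p1 p2 n1 n2).
Qed.

Lemma Q2 p p' : isMax p -> isMax p' -> startsl p = startsl p' -> p = p'.
Proof.
case: p => [z|[a w]]; case: p' => [z'|[a' w']] /=.
- by move=> _ _ ->.
- move=> /andP[/forallP /(_ (last a' w')) /negP h _] _ e; by case: h; rewrite e.
- move=> _ /andP[/forallP /(_ (last a w)) /negP h _] e; by case: h; rewrite e.
move=> /and3P[p1 s1 _] /and3P[p2 s2 _] /injo e.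
have h1 : sorted (crel o i) (rcons (belast a w) (last a w)) by rewrite -lastI.
have h2 : sorted (crel o i) (rcons (belast a' w') (last a w)) by rewrite e -lastI.
have := L1d injo h1 h2; rewrite head_belast e head_belast => /(_ s1 s2) eb.
have : a :: w = a' :: w' by rewrite lastI eb e -lastI.
by case=> -> ->.
Qed.

Lemma Q3 z : [forall b, o b != z] -> exists p, isMax p /\ endsl p = z.
Proof.
move=> hz.
case: (boolP [exists b, i b == z]) => [/existsP [x /eqP hx]|].
  have nsx : nosucc o i x by rewrite /nosucc hx.
  have [w [pw nw]] := L3 injo inji nsx.
  by exists (inr (x, w)); rewrite /= pw nsx nw.
rewrite negb_exists => hz'.
by exists (inl z); rewrite /= hz.
Qed.

Lemma Q4 z : [forall b, i b != z] -> exists p, isMax p /\ startsl p = z.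
Proof.
move=> hz.
case: (boolP [exists b, o b == z]) => [/existsP [y /eqP hy]|].
  have npy : nopred o i y by rewrite /nopred hy.
  have [u [su nu]] := L3d injo inji npy.
  case: u su nu => [|h t] su nu.
    by exists (inr (y, [::])); rewrite /= npy nu.
  exists (inr (h, rcons t y)); rewrite /= last_rcons hy; split => //.
  by apply/and3P; split.
rewrite negb_exists => hz'.
by exists (inl z); rewrite /= hz hz'.
Qed.

Lemma Q5 p : isMax p -> [forall b, o b != endsl p] /\ [forall b, i b != startsl p].
Proof. by case: p => [z /andP[]|[a w] /and3P[]]. Qed.

Lemma Q6 p : isMax p -> uniq (parr p).
Proof. case: p => [z|[a w]] // /and3P[pw _ nw]; exact: (L2 inji pw nw). Qed.

Lemma seq_eq (s1 s2 : seq A) c : c \in s1 -> c \in s2 ->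
  sorted (crel o i) s1 -> sorted (crel o i) s2 ->
  nosucc o i (head c s1) -> nosucc o i (head c s2) ->
  nopred o i (last c s1) -> nopred o i (last c s2) -> s1 = s2.
Proof.
case/splitPr => u1 v1; case/splitPr => u2 v2.
move=> q1 q2; have [r1 p1] := sorted_split q1; have [r2 p2] := sorted_split q2.
rewrite (head_cat_cons c c u1) (head_cat_cons c c u2) (last_cat c u1) (last_cat c u2) /=.
move=> h1 h2 l1 l2.
by rewrite (L1 inji p1 p2 l1 l2) (L1d injo r1 r2 h1 h2).
Qed.

Lemma Q6' p p' c : isMax p -> isMax p' -> c \in parr p -> c \in parr p' -> p = p'.
Proof.
case: p => [z|[a w]] //; case: p' => [z'|[a' w']] // /and3P[p1 s1 n1] /and3P[p2 s2 n2].
move=> c1 c2.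
have := seq_eq c1 c2 p1 p2 s1 s2 n1 n2.
by case=> -> ->.
Qed.

Lemma Q7 p b g : isMax p -> b \in parr p -> o g = i b -> g \in parr p.
Proof.
case: p => [z|[a w]] // /and3P[p1 s1 _] /=.
have : sorted (crel o i) (a :: w) by [].
have : nosucc o i (head b (a :: w)) by [].
move: (a :: w) => s hs ss bin.
case/splitPr: bin hs ss => u v.
rewrite head_cat_cons => hs q e; have [r _] := sorted_split q; clear q.
case/lastP: u hs r => [|u d] /=.
  by move=> /forallP /(_ g); rewrite e eqxx.
move=> _ q2; have /eqP e2 := sorted_rcons2 q2.
have -> : g = d by apply: injo; rewrite e e2.
by rewrite mem_cat mem_rcons mem_head.
Qed.

Lemma Q8 c : [forall b, i b != o c] -> exists p, isMax p /\ c \in parr p.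
Proof.
move=> /Q4 [[z|[a w]] [hm hs]] /=.
  move: hm => /andP[/forallP /(_ c)]; by rewrite -hs /= eqxx.
exists (inr (a, w)); split => //=.
move: hs => /= /injo <-; exact: mem_last.
Qed.

End QP.

Definition pb (P : Prop) : bool := if excluded_middle_informative P then true else false.
Lemma pbP P : reflect P (pb P).
Proof. rewrite /pb; case: excluded_middle_informative => h; by constructor. Qed.

Lemma fin_of_inj (T : eqType) (S : finType) (P : T -> Prop) (g : T -> S) :
  (forall x y, P x -> P y -> g x = g y -> x = y) -> exists s : seq T, forall x, P x -> x \in s.
Proof.
move=> ginj.
suff H : forall l : seq S, exists s : seq T, forall x, P x -> g x \in l -> x \in s.
  have [s Hs] := H (enum S); exists s => x Px; apply: Hs => //; by rewrite mem_enum.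
elim=> [|z l [s Hs]]; first by exists [::].
case: (classic (exists x, P x /\ g x = z)) => [[x0 [P0 g0]]|nex].
  exists (x0 :: s) => x Px; rewrite in_cons => /orP [/eqP e|xl].
    by rewrite (ginj x x0 Px P0 (etrans e (esym g0))) eqxx.
  by rewrite Hs ?orbT.
exists s => x Px; rewrite in_cons => /orP [/eqP e|xl]; last exact: Hs.
by case: nex; exists x.
Qed.

Lemma min_pickle (T : countType) (P : T -> Prop) x : P x ->
  exists r, P r /\ forall y, P y -> pickle r <= pickle y.
Proof.
move: {2}(pickle x) (erefl (pickle x)) => n.
elim/ltn_ind: n x => n IH x hx Px.
case: (classic (exists y, P y /\ pickle y < n)) => [[y [Py lt]]|nex].
  exact: (IH _ lt y erefl Py).
exists x; split => // y Py; rewrite hx leqNgt; apply/negP => lt.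
by apply: nex; exists y.
Qed.

Section CRT.
Variables (T : eqType) (P : T -> Prop) (R : T -> T -> Prop) (s : seq T).
Hypotheses (RP : forall x y, R x y -> P y)
  (Rtot : forall x, P x -> exists y, R x y)
  (Rfun : forall x y y', R x y -> R x y' -> y = y')
  (Rinj : forall x x' y, R x y -> R x' y -> x = x')
  (Pfin : forall x, P x -> x \in s).

Definition fR (x : T) : T :=
  match excluded_middle_informative (exists y, R x y) with
  | left H => proj1_sig (constructive_indefinite_description _ H)
  | right _ => x end.

Lemma fRP x : P x -> R x (fR x).
Proof.
move=> Px; rewrite /fR; case: excluded_middle_informative => [H|H].
  exact: proj2_sig (constructive_indefinite_description _ H).
by case: H; apply: Rtot.
Qed.

Lemma iterP_ n x : P x -> P (iter n fR x).
Proof. by elim: n => //= n IH Px; apply: (RP (fRP (IH Px))). Qed.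

Lemma iter_crt n x : P x -> clos_refl_trans T R x (iter n fR x).
Proof.
elim: n => [|n IH] Px /=; first exact: rt_refl.
apply: rt_trans (IH Px) _; apply: rt_step; exact: fRP (iterP_ n Px).
Qed.

Lemma crt_iter x y : P x -> clos_refl_trans T R x y -> exists n, y = iter n fR x.
Proof.
move=> Px /clos_rt_rt1n_iff H; elim: H Px => [z|a b c hab _ IH] Pa.
  by exists 0.
have eb : b = fR a by apply: Rfun hab (fRP Pa).
have [n ->] := IH (RP hab).
by exists n.+1; rewrite iterSr -eb.
Qed.

Lemma fR_inj a b : P a -> P b -> fR a = fR b -> a = b.
Proof. move=> Pa Pb e; apply: (Rinj (fRP Pa)); rewrite e; exact: fRP. Qed.

Lemma iter_cancel x j k : P x -> iter j fR x = iter (j + k) fR x -> x = iter k fR x.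
Proof.
move=> Px; elim: j => // j IH /=.
move/(fR_inj (iterP_ _ Px) (iterP_ _ Px)); exact: IH.
Qed.

Lemma period x : P x -> exists d, 0 < d /\ iter d fR x = x.
Proof.
move=> Px.
set l := [seq iter k fR x | k <- iota 0 (size s).+1].
have : ~~ uniq l.
  apply/negP => ul.
  have sub : {subset l <= s}.
    move=> y /mapP [k _ ->]; exact: Pfin (iterP_ _ Px).
  by have := uniq_leq_size ul sub; rewrite size_map size_iota ltnn.
case/(uniqPn x) => j [k [jk kl]].
rewrite size_map size_iota in kl.
rewrite !(nth_map 0) ?size_iota; try lia.
rewrite !nth_iota; try lia.
rewrite !add0n => e.
exists (k - j); split; first lia.
have : iter j fR x = iter (j + (k - j)) fR x by rewrite subnKC // ltnW.
by move/(iter_cancel Px) => <-.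
Qed.

Lemma crt_sym x y : P x -> clos_refl_trans T R x y -> clos_refl_trans T R y x.
Proof.
move=> Px /(crt_iter Px) [n ->].
have [d [d0 hd]] := period Px.
have hm : forall k, iter (d * k) fR x = x.
  elim=> [|k IH]; first by rewrite muln0.
  by rewrite mulnS iterD IH hd.
have := iter_crt (d * n - n) (iterP_ n Px).
rewrite -iterD subnK ?hm //.
by rewrite leq_pmull.
Qed.

End CRT.

Lemma negb_eq_swap (a b : bool) : (~~ a == b) = (a == ~~ b).
Proof. by case: a; case: b. Qed.

Section Bridge.
Variable Q : quiver.
Variables sg ta : qA Q -> bool.
Hypothesis hvs : valid_signs sg ta.

Definition oN (a : qA Q) : (qV Q * bool)%type := (qs a, sg a).
Definition iN (a : qA Q) : (qV Q * bool)%type := (qt a, ta a).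
Definition iM (a : qA Q) : (qV Q * bool)%type := (qt a, ~~ ta a).
Definition flip (z : (qV Q * bool)%type) : (qV Q * bool)%type := (z.1, ~~ z.2).

Lemma injoN : injective oN.
Proof.
move=> a b [e1 e2]; case: hvs => h1 _ _; apply/eqP; apply: contraT => ne.
by have := h1 a b ne e1; rewrite e2 eqxx.
Qed.

Lemma injiN : injective iN.
Proof.
move=> a b [e1 e2]; case: hvs => _ h2 _; apply/eqP; apply: contraT => ne.
by have := h2 a b ne e1; rewrite e2 eqxx.
Qed.

Lemma injiM : injective iM.
Proof. by move=> a b [e1 /negb_inj e2]; apply: injiN; rewrite /iN e1 e2. Qed.

Lemma anti_rel x y : ((qs x == qt y) && qR x y) = crel oN iN x y.
Proof.
rewrite /crel /oN /iN xpair_eqE.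
case: (eqVneq (qs x) (qt y)) => //= e.
case: hvs => _ _ /(_ x y e) h.
by apply/idP/eqP; rewrite -h.
Qed.

Lemma perm_rel x y : ((qs x == qt y) && ~~ qR x y) = crel oN iM x y.
Proof.
rewrite /crel /oN /iM xpair_eqE.
case: (eqVneq (qs x) (qt y)) => //= e.
case: hvs => _ _ /(_ x y e) h.
have -> : qR x y = (sg x == ta y) by apply/idP/eqP; rewrite -h.
by case: (sg x); case: (ta y).
Qed.

Lemma isN_eq p : isN sg ta p = isMax oN iN p.
Proof.
case: p => [[x e]|[a w]]; rewrite /isN /isMax /=.
  rewrite !negb_exists; congr (_ && _); apply: eq_forallb => b;
  by rewrite /oN /iN xpair_eqE.
rewrite (eq_path anti_rel) !negb_exists; congr [&& _, _ & _]; apply: eq_forallb => b;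
by rewrite /oN /iN xpair_eqE.
Qed.

Lemma isM_eq p : isM sg ta p = isMax oN iM p.
Proof.
case: p => [[x e]|[a w]]; rewrite /isM /isMax /=.
  rewrite !negb_exists negbK; congr (_ && _); apply: eq_forallb => b;
  by rewrite /oN /iM xpair_eqE ?negb_eq_swap.
rewrite (eq_path perm_rel) !negb_exists; congr [&& _, _ & _]; apply: eq_forallb => b;
by rewrite /oN /iM xpair_eqE ?negb_eq_swap.
Qed.

Lemma start_eq p : startsl oN p = (psrc p, psig sg p).
Proof. by case: p => [[x e]|[a w]]. Qed.
Lemma endN_eq p : endsl iN p = (ptgt p, ptauN ta p).
Proof. by case: p => [[x e]|[a w]]. Qed.
Lemma endM_eq p : endsl iM p = (ptgt p, ~~ ptauM ta p).
Proof. by case: p => [[x e]|[a w]] //=; rewrite negbK. Qed.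
Lemma parr_eq (p : qpath Q) : parr p = parrows p.
Proof. by case: p => [[x e]|[a w]]. Qed.

Lemma phiR_eq p p' : phiR sg ta p p' <->
  [/\ isMax oN iM p, isMax oN iN p' & endsl iN p' = endsl iM p].
Proof.
rewrite /phiR isN_eq isM_eq endN_eq endM_eq; split.
  by case=> [h1 [h2 [-> ->]]].
by case=> h1 h2 [-> ->].
Qed.

Lemma psiR_eq p p' : psiR sg ta p p' <->
  [/\ isMax oN iN p, isMax oN iM p' & startsl oN p' = flip (startsl oN p)].
Proof.
rewrite /psiR isN_eq isM_eq !start_eq /flip /=; split.
  by case=> [h1 [h2 [-> ->]]].
by case=> h1 h2 [-> ->].
Qed.

Lemma iM_flip b z : (iM b == flip z) = (iN b == z).
Proof. by case: z => x e; rewrite /iM /iN /flip !xpair_eqE /= negb_eq_swap negbK. Qed.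

Lemma Phi_tot p : isN sg ta p -> exists p'', PhiR sg ta p p''.
Proof.
rewrite isN_eq => hp.
have [_ hs] := Q5 hp.
have hs' : [forall b, iM b != flip (startsl oN p)].
  by apply/forallP => b; rewrite iM_flip; apply: (forallP hs).
have [p' [hp' sp']] := Q4 injoN injiM hs'.
have [he _] := Q5 hp'.
have [p'' [hp'' ep'']] := Q3 injoN injiN he.
exists p'', p'; split; [apply/psiR_eq | apply/phiR_eq]; by split.
Qed.

Lemma Phi_fun p p1 p2 : PhiR sg ta p p1 -> PhiR sg ta p p2 -> p1 = p2.
Proof.
move=> [q1 [/psiR_eq [h0 m1 s1] /phiR_eq [_ n1 e1]]] [q2 [/psiR_eq [_ m2 s2] /phiR_eq [_ n2 e2]]].
have eq : q1 = q2 by apply: (Q2 injoN m1 m2); rewrite s1 s2.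
subst q2; apply: (Q1 injiN n1 n2); by rewrite e1 e2.
Qed.

Lemma Phi_inj p1 p2 p : PhiR sg ta p1 p -> PhiR sg ta p2 p -> p1 = p2.
Proof.
move=> [q1 [/psiR_eq [h1 m1 s1] /phiR_eq [_ n1 e1]]] [q2 [/psiR_eq [h2 m2 s2] /phiR_eq [_ n2 e2]]].
have eq : q1 = q2 by apply: (Q1 injiM m1 m2); rewrite -e1 -e2.
subst q2; apply: (Q2 injoN h1 h2).
move: s1; rewrite s2 /flip; case: (startsl oN p1) => x1 b1; case: (startsl oN p2) => x2 b2 /=.
by case=> -> /negb_inj ->.
Qed.

Lemma Phi_P p p' : PhiR sg ta p p' -> isN sg ta p'.
Proof. by move=> [q [_ /phiR_eq [_ n _]]]; rewrite isN_eq. Qed.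

Lemma N_fin : exists s : seq (qpath Q), forall p, isN sg ta p -> p \in s.
Proof.
apply: (fin_of_inj (g := endsl iN)) => x y; rewrite !isN_eq => hx hy.
exact: (@Q1 (qV Q) (qA Q) oN iN injiN x y hx hy).
Qed.

End Bridge.

Section Psi.
Variable Q : quiver.
Variables sg ta : qA Q -> bool.
Hypothesis hvs : valid_signs sg ta.

Definition Cset : {set qA Q} := [set a | pb (inC sg ta a)].

Lemma inCP a : reflect (inC sg ta a) (a \in Cset).
Proof. rewrite inE; exact: pbP. Qed.

Lemma C_succ a : inC sg ta a -> exists b, inC sg ta b /\ iN ta b = oN sg a.
Proof.
move=> ha.
case: (boolP [forall b, iN ta b != oN sg a]) => [h|].
  have [p [hp ap]] := Q8 (injoN hvs) (injiN hvs) h.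
  by case: ha; exists p; rewrite isN_eq // -parr_eq.
move=> /forallPn [b]; rewrite negbK => /eqP hb.
exists b; split => //.
move=> [p [hp bp]]; apply: ha; exists p; split => //.
rewrite isN_eq // in hp; rewrite -parr_eq in bp *.
exact: (@Q7 (qV Q) (qA Q) (oN sg) (iN ta) (injoN hvs) p b a hp bp (esym hb)).
Qed.

Definition F (a : qA Q) : qA Q :=
  if a \in Cset then odflt a [pick b | iN ta b == oN sg a] else a.

Lemma F_C a : a \in Cset -> iN ta (F a) = oN sg a /\ F a \in Cset.
Proof.
move=> aC; have [b [bC hb]] := C_succ (elimT (inCP a) aC).
rewrite /F aC; case: pickP => [b' /eqP hb'|none] /=.
  have -> : b' = b by apply: (injiN hvs); rewrite hb hb'.
  by split => //; apply/inCP.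
by have := none b; rewrite hb eqxx.
Qed.

Lemma F_nC a : a \notin Cset -> F a = a.
Proof. by rewrite /F => /negbTE ->. Qed.

Lemma F_inj : injective F.
Proof.
move=> a b e.
case: (boolP (a \in Cset)) => aC; case: (boolP (b \in Cset)) => bC.
- have [h1 _] := F_C aC; have [h2 _] := F_C bC.
  apply: (injoN hvs); by rewrite -h1 -h2 e.
- have [_ h] := F_C aC; move: h; by rewrite e F_nC // (negbTE bC).
- have [_ h] := F_C bC; move: h; by rewrite -e F_nC // (negbTE aC).
- by rewrite -(F_nC aC) -(F_nC bC) e.
Qed.

Lemma PsiR_F a b : PsiR sg ta a b <-> a \in Cset /\ b = F a.
Proof.
split.
  move=> [ha [hb [e1 e2]]].
  have aC : a \in Cset by apply/inCP.
  split => //; have [h _] := F_C aC.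
  apply: (injiN hvs); by rewrite h /iN /oN e1 e2.
move=> [aC ->]; have [h fC] := F_C aC.
move: h; rewrite /iN /oN => [[e1 e2]].
split; first by apply/inCP.
by split; first by apply/inCP.
Qed.

Lemma PsiOrb_F a b : PsiOrb sg ta a b <-> fconnect F a b.
Proof.
split.
  elim=> [x y /PsiR_F [_ ->]|x|x y z _ h1 _ h2].
  - exact: fconnect1.
  - exact: connect0.
  - exact: connect_trans h1 h2.
move/iter_findex <-; elim: (findex F a b) => [|n IH] /=; first exact: rt_refl.
apply: rt_trans IH _.
case: (boolP (iter n F a \in Cset)) => xC.
  by apply: rt_step; apply/PsiR_F.
rewrite F_nC //; exact: rt_refl.
Qed.

End Psi.

Lemma card_enum (T : finType) (P : pred T) (s : seq T) :
  uniq s -> (forall x, P x <-> x \in s) -> #|P| = size s.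
Proof.
move=> us h; rewrite -(card_uniqP us); apply: eq_card => x.
by apply/idP/idP => /h.
Qed.

Lemma flatten_uniq (T U : eqType) (g : T -> seq U) (s : seq T) :
  uniq s -> (forall x, x \in s -> uniq (g x)) ->
  (forall x y c, x \in s -> y \in s -> c \in g x -> c \in g y -> x = y) ->
  uniq (flatten (map g s)).
Proof.
elim: s => [|x s IH] //= /andP[xs us] hu hd.
rewrite cat_uniq hu ?mem_head // IH //; last first.
- by move=> y z c ys zs; apply: hd; rewrite in_cons ?ys ?zs orbT.
- by move=> y ys; apply: hu; rewrite in_cons ys orbT.
rewrite andbT; apply/hasPn => c /flattenP [l /mapP [y ys ->] cy]; apply/negP => cx.
have exy : x = y by apply: (hd x y c) => //; rewrite in_cons ?ys ?eqxx ?orbT.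
by move: xs; rewrite exy ys.
Qed.

Lemma plen_eq (Q : quiver) (p : qpath Q) : plen p = size (parrows p).
Proof. by case: p => [[x e]|[a w]]. Qed.

Section PsiCount.
Variable Q : quiver.
Variables sg ta : qA Q -> bool.
Hypothesis hvs : valid_signs sg ta.

Notation F := (F sg ta).
Notation Cset := (Cset sg ta).

Lemma Finj : injective F. Proof. exact: F_inj hvs. Qed.

Lemma fcon_sym a b : fconnect F a b = fconnect F b a.
Proof. by apply: fconnect_sym; exact: Finj. Qed.

Lemma fcon_same a b : fconnect F a b -> fconnect F a =1 fconnect F b.
Proof. apply: same_connect; exact: fcon_sym. Qed.

Lemma fcon_C a b : a \in Cset -> fconnect F a b -> b \in Cset.
Proof.
move=> aC /iter_findex <-; elim: (findex F a b) => //= n IH.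
by have [_ ->] := F_C hvs IH.
Qed.

Definition minrep (a : qA Q) : qA Q := [arg min_(b < a | fconnect F a b) pickle b].

Lemma minrepP a : fconnect F a (minrep a) /\
  forall b, fconnect F a b -> pickle (minrep a) <= pickle b.
Proof. rewrite /minrep; case: arg_minnP => //; exact: connect0. Qed.

Lemma minrep_uniq a r : fconnect F a r -> (forall b, fconnect F a b -> pickle r <= pickle b) ->
  minrep a = r.
Proof.
move=> ar hr; have [h1 h2] := minrepP a.
apply: (pcan_inj pickleK); apply/eqP; rewrite eqn_leq h2 //=; exact: hr.
Qed.

Lemma minrep_same a b : fconnect F a b -> minrep a = minrep b.
Proof.
move=> ab; have [h1 h2] := minrepP b.
apply: minrep_uniq; first exact: connect_trans ab h1.
by move=> c; rewrite (fcon_same ab); apply: h2.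
Qed.

Lemma minrep_idem a : minrep (minrep a) = minrep a.
Proof. by rewrite -(minrep_same (proj1 (minrepP a))). Qed.

Lemma order_same a b : fconnect F a b -> order F a = order F b.
Proof. by move=> ab; rewrite /order; apply: eq_card; apply: fcon_same. Qed.

Lemma PsiRep_char y r : PsiRep sg ta 0 y r <->
  [/\ r \in Cset, minrep r = r & order F r = y].
Proof.
split.
  move=> [_ [hC [hmin [s [[us hs] sz]]]]].
  have rC : r \in Cset by apply/inCP.
  split => //.
    apply: minrep_uniq; first exact: connect0.
    by move=> b /(PsiOrb_F hvs) /hmin.
  rewrite -sz /order; apply: card_enum => // b; rewrite -hs; split.
    by move/(PsiOrb_F hvs).
  by move/(PsiOrb_F hvs).
move=> [rC hm ho]; split => //; split; first exact/inCP.
split.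
  move=> b /(PsiOrb_F hvs) rb; rewrite -{1}hm; exact: (proj2 (minrepP r)).
exists (orbit F r); split; last by rewrite size_orbit.
split; first exact: orbit_uniq.
by move=> b; rewrite -fconnect_orbit; split => /(PsiOrb_F hvs).
Qed.

End PsiCount.

Lemma orb_N (Q : quiver) (sg ta : qA Q -> bool) x y :
  isN sg ta x -> PhiOrb sg ta x y -> isN sg ta y.
Proof.
move=> hx H; elim: H hx => [a b [q [_ [_ [hN _]]]] //|a //|a b c _ IH1 _ IH2] ha.
exact: IH2 (IH1 ha).
Qed.

Lemma f_nonempty (T : eqType) (P : T -> Prop) s n x : fin_enum P s -> size s = n -> P x -> 0 < n.
Proof. by move=> [_ h] <- /h; case: s {h}. Qed.

Section Main.
Variable Q : quiver.
Variables (sg ta : qA Q -> bool) (m p : nat) (D : {set qA Q}).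
Hypotheses (hg : gentle Q) (hvs : valid_signs sg ta)
  (hf : forall x y : nat,
     f_is sg ta x y (m * ((x == 0) && (y == 3)) + ((x == p + m + 2) && (y == p))))
  (hts : triangle_selection sg ta D).

Lemma stepA : exists w0 s0, [/\ isN sg ta w0, fin_enum (PhiOrb sg ta w0) s0,
  size s0 = p + m + 2, sumn (map (@plen Q) s0) = p &
  forall r, PhiRep sg ta (p + m + 2) p r -> r = w0].
Proof.
have [n1 [n2 [hn [[s1 [[u1 h1] z1]] [s2 [[u2 h2] z2]]]]]] := hf (p + m + 2) p.
have {}hn : n1 + n2 = 1 by rewrite -hn addn2 /= muln0 !eqxx.
have e2 : n2 = 0.
  case: s2 u2 h2 z2 => [|r s2] // u2 h2 <-.
  by have [e _] := (proj2 (h2 r) (mem_head _ _)); rewrite addn2 in e.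
move: hn; rewrite e2 addn0 => e1; rewrite e1 in z1.
case: s1 u1 h1 z1 => [|w0 [|w1 s1]] // u1 h1 _.
have [hw0 [hmin [s0 [hs0 [sz sm]]]]] := proj2 (h1 w0) (mem_head _ _).
exists w0, s0; split => // r /h1; by rewrite inE => /eqP.
Qed.

Lemma stepB w0 : isN sg ta w0 -> (forall r, PhiRep sg ta (p + m + 2) p r -> r = w0) ->
  forall w, isN sg ta w -> PhiOrb sg ta w0 w.
Proof.
move=> hw0 huniq w hw.
have [sN hsN] := N_fin hvs.
have [r [wr hmin]] := min_pickle (rt_refl _ (PhiR sg ta) w).
have rN : isN sg ta r := orb_N hw wr.
have sym : forall x y, isN sg ta x -> PhiOrb sg ta x y -> PhiOrb sg ta y x.
  move=> x y hx hxy.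
  apply: (@crt_sym _ (fun x => isN sg ta x) (PhiR sg ta) sN) => //.
  - by move=> a b; apply: Phi_P.
  - by move=> a; apply: Phi_tot.
  - by move=> a b b'; apply: Phi_fun.
  - by move=> a a' b; apply: Phi_inj.
have rw : PhiOrb sg ta r w := sym w r hw wr.
set sr := undup [seq x <- sN | pb (PhiOrb sg ta r x)].
have fe : fin_enum (PhiOrb sg ta r) sr.
  split; first exact: undup_uniq.
  move=> x; rewrite mem_undup mem_filter; split => [h|/andP [/pbP h _] //].
  by rewrite (introT (pbP _) h) hsN //; exact: orb_N rN h.
have rep : PhiRep sg ta (size sr) (sumn (map (@plen Q) sr)) r.
  split => //; split; last by exists sr.
  move=> y ry; apply: hmin; exact: rt_trans wr ry.
have [n1 [n2 [hn [[s1 [[u1 h1] z1]] _]]]] := hf (size sr) (sumn (map (@plen Q) sr)).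
have pos : 0 < n1 := f_nonempty (conj u1 h1) z1 rep.
have pos2 : 0 < size sr := f_nonempty fe erefl (rt_refl _ _ r).
move: hn; rewrite (negbTE (lt0n_neq0 pos2)) /= muln0 add0n.
case: andP => [[/eqP e1 /eqP e2] _|_]; last by lia.
rewrite e1 e2 in rep; by rewrite -(huniq r rep).
Qed.

Lemma stepC (s0 : seq (qpath Q)) : (forall x, isN sg ta x <-> x \in s0) -> uniq s0 ->
  size s0 + #|qA Q| = 2 * #|qV Q|.
Proof.
move=> hs u0.
set sinks := [set z | [forall b, oN sg b != z]].
have e1 : #|sinks| = size (map (endsl (iN ta)) s0).
  apply: card_enum.
    rewrite map_inj_in_uniq // => x y /hs hx /hs hy.
    rewrite !isN_eq // in hx hy.
    exact: (@Q1 (qV Q) (qA Q) (oN sg) (iN ta) (injiN hvs) x y hx hy).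
  move=> z; change (z \in sinks <-> z \in map (endsl (iN ta)) s0); rewrite inE; split.
    move=> hz; have [q [hq eq]] := Q3 (injoN hvs) (injiN hvs) hz.
    rewrite -eq; apply: map_f; apply/hs; by rewrite isN_eq.
  move=> /mapP [x /hs hx ->]; rewrite isN_eq // in hx; exact: (proj1 (Q5 hx)).
have e2 : #|sinks| = #|~: [set oN sg b | b in [set: qA Q]]|.
  apply: eq_card => z; rewrite !inE; apply/forallP/idP.
    move=> h; apply/negP => /imsetP [b _ eb]; by have := h b; rewrite eb eqxx.
  move=> h b; apply/negP => /eqP eb; move/negP: h; apply; apply/imsetP; by exists b.
have e3 := cardsC [set oN sg b | b in [set: qA Q]].
rewrite card_imset in e3; last exact: injoN hvs.
rewrite cardsT card_prod card_bool -e2 e1 size_map in e3.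
by rewrite addnC mulnC.
Qed.

Lemma stepD (s0 : seq (qpath Q)) : (forall x, isN sg ta x <-> x \in s0) -> uniq s0 ->
  sumn (map (@plen Q) s0) = #|~: Cset sg ta|.
Proof.
move=> hs u0.
have e : sumn (map (@plen Q) s0) = size (flatten (map (@parrows Q) s0)).
  by rewrite size_flatten /shape -map_comp; congr sumn; apply: eq_map => x /=; rewrite plen_eq.
rewrite e; symmetry; apply: card_enum.
  apply: flatten_uniq => //.
    move=> x /hs; rewrite isN_eq // -parr_eq => hx; exact: (@Q6 (qV Q) (qA Q) (oN sg) (iN ta) (injiN hvs) x hx).
  move=> x y c /hs hx /hs hy; rewrite isN_eq // in hx; rewrite isN_eq // in hy.
  rewrite -!parr_eq; exact: (@Q6' (qV Q) (qA Q) (oN sg) (iN ta) (injoN hvs) (injiN hvs) x y c hx hy).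
move=> c; change (c \in ~: Cset sg ta <-> c \in flatten (map (@parrows Q) s0)).
rewrite inE; split.
  move=> /negP h; case: (classic (exists q, isN sg ta q /\ c \in parrows q)) => [[q [hq cq]]|nex].
    apply/flattenP; exists (parrows q) => //; apply: map_f; exact/hs.
  by case: h; apply/inCP.
move=> /flattenP [l /mapP [x /hs xs ->] cx]; apply/negP => /inCP h; apply: h.
by exists x.
Qed.

Lemma stepE1 a : a \in Cset sg ta -> order (F sg ta) a = 3.
Proof.
move=> aC.
set r := minrep sg ta a.
have ar : fconnect (F sg ta) a r := proj1 (minrepP sg ta a).
have rC : r \in Cset sg ta := fcon_C hvs aC ar.
have rr : minrep sg ta r = r by rewrite /r minrep_idem.
rewrite (order_same hvs ar).
have rep : PsiRep sg ta 0 (order (F sg ta) r) r by apply/(PsiRep_char hvs).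
have [n1 [n2 [hn [_ [s2 [[u2 h2] z2]]]]]] := hf 0 (order (F sg ta) r).
have pos : 0 < n2 := f_nonempty (conj u2 h2) z2 rep.
move: hn; rewrite eqxx /= addn2 /= addn0.
by case: eqP => // _; rewrite muln0; lia.
Qed.

Definition Rmin := [set r in Cset sg ta | minrep sg ta r == r].

Lemma Rmin_char r : r \in Rmin <-> PsiRep sg ta 0 3 r.
Proof.
rewrite (PsiRep_char hvs) inE; split.
  by case/andP => rC /eqP rr; split => //; apply: stepE1.
by case=> rC rr _; rewrite rC rr eqxx.
Qed.

Lemma stepE2 : #|Rmin| = m.
Proof.
have [n1 [n2 [hn [[s1 [[u1 h1] z1]] [s2 [[u2 h2] z2]]]]]] := hf 0 3.
have e1 : n1 = 0.
  case: s1 u1 h1 z1 => [|r s1] u1 h1 <- //.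
  have [_ [_ [s [fe [sz _]]]]] := proj2 (h1 r) (mem_head _ _).
  by have := f_nonempty fe sz (rt_refl _ _ r).
move: hn; rewrite e1 add0n /= addn2 /= addn0 muln1 => ->.
rewrite -z2; apply: card_enum => // r.
change (r \in Rmin <-> r \in s2); rewrite Rmin_char; exact: h2.
Qed.

Lemma stepE3 : #|Cset sg ta| = 3 * #|Rmin|.
Proof.
rewrite -sum1_card (partition_big (minrep sg ta) (mem Rmin)); last first.
  move=> a aC; rewrite /= inE (fcon_C hvs aC (proj1 (minrepP sg ta a))) /=.
  by rewrite minrep_idem.
rewrite mulnC -sum_nat_const; apply: eq_bigr => r rR.
rewrite sum1dep_card.
move: rR; rewrite -[mem Rmin r]/(r \in Rmin) inE => /andP [rC /eqP rr].
rewrite -(stepE1 rC) /order; apply: eq_card => a; rewrite inE.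
change ((a \in Cset sg ta) && (minrep sg ta a == r) = fconnect (F sg ta) r a).
apply/andP/idP.
  case=> aC /eqP ar; rewrite (fcon_sym hvs) -ar; exact: (proj1 (minrepP sg ta a)).
move=> ra; split; first by apply: (fcon_C hvs rC).
by rewrite -(minrep_same hvs ra) rr.
Qed.

Lemma D_C d : d \in D -> d \in Cset sg ta.
Proof. by move=> /(proj1 hts) [h _]; apply/inCP. Qed.

Lemma stepE4 : #|D| = #|Rmin|.
Proof.
have inj : {in D &, injective (minrep sg ta)}.
  move=> d1 d2 d1D d2D e.
  have c12 : fconnect (F sg ta) d1 d2.
    apply: connect_trans (proj1 (minrepP sg ta d1)) _.
    rewrite e fcon_sym //; exact: (proj1 (minrepP sg ta d2)).
  have [x [[xD hx] hu]] := proj2 hts d1 (proj1 hts d1 d1D).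
  rewrite -(hu d1 (conj d1D (rt_refl _ _ _))).
  apply: hu; split => //; exact/(PsiOrb_F hvs).
rewrite -(card_in_imset inj); apply: eq_card => r.
change (r \in [set minrep sg ta x | x in D] = (r \in Rmin)).
apply/imsetP/idP.
  move=> [d dD ->]; rewrite inE (fcon_C hvs (D_C dD) (proj1 (minrepP sg ta d))) /=.
  by rewrite minrep_idem.
move=> rR; have rep := proj1 (Rmin_char r) rR.
have tr : in_triangle sg ta r.
  case: rep => _ [rC [_ [s [fe sz]]]]; split => //; by exists s.
have [d [[dD hd] _]] := proj2 hts r tr.
exists d => //.
move: rR; rewrite inE => /andP [_ /eqP rr].
by rewrite -(minrep_same hvs (proj1 (PsiOrb_F hvs r d) hd)) rr.
Qed.

End Main.

Lemma card_val_le (A : finType) (P0 : pred A) (P : pred A) :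
  #|[set x : {a | P0 a} | P (val x)]| <= #|[set a | P a]|.
Proof.
rewrite -(card_imset _ val_inj); apply: subset_leq_card.
by apply/subsetP => y /imsetP [x]; rewrite !inE => hx ->.
Qed.

Lemma path_decomp (A : finType) (P0 : pred A) (r : rel A) (w : seq {a | P0 a}) :
  (exists w1 a b w2, map val w = w1 ++ a :: b :: w2 /\ r a b) ->
  exists w1 a b w2, w = w1 ++ a :: b :: w2 /\ r (val a) (val b).
Proof.
elim: w => [|x w IH] [w1 [a [b [w2 [e hr]]]]]; first by case: w1 e.
case: w1 e => [|c w1] /= [ex e].
  case: w {IH} e => [|y w] //= [ey e]; exists [::], x, y, w; split => //; by rewrite ex ey.
have [v1 [a' [b' [v2 [-> hr']]]]] := IH (ex_intro _ w1 (ex_intro _ a (ex_intro _ b (ex_intro _ w2 (conj e hr))))).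
by exists (x :: v1), a', b', v2.
Qed.

Unset Implicit Arguments.
Set Strict Implicit.

Theorem lemma6p2 (Q : quiver) (sg ta : qA Q -> bool) (m p : nat) (D : {set qA Q}) :
  gentle Q -> valid_signs sg ta ->
  (forall x y : nat,
     f_is sg ta x y (m * ((x == 0) && (y == 3)) + ((x == p + m + 2) && (y == p)))) ->
  triangle_selection sg ta D ->
  gentle (qremove D) /\ #|qV (qremove D)| = #|qA (qremove D)|.+1.
Proof.
move=> hg hvs hf hts.
have [w0 [s0 [hw0 [u0 hs0] sz sm huniq]]] := stepA hf.
have hN : forall x, isN sg ta x <-> x \in s0.
  move=> x; rewrite -hs0; split; first exact: (stepB hvs hf hw0 huniq).
  exact: orb_N hw0.
have eC := stepC hvs hN u0.
have eD := stepD hvs hN u0.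
have eA := cardsC (Cset sg ta).
have e3 := stepE3 hvs hf.
have e2 := stepE2 hvs hf.
have e4 := stepE4 hvs hf hts.
have eDc := cardsC D.
split; last first.
  have eV : #|qV (qremove D)| = #|qV Q| := erefl.
  rewrite eV /= card_sig.
  have -> : #|[pred a | a \notin D]| = #|~: D| by apply: eq_card => a; rewrite !inE.
  rewrite sz in eC; rewrite sm in eD.
  have eAD : #|Cset sg ta| + #|~: Cset sg ta| = #|D| + #|~: D| by rewrite eA eDc.
  rewrite -eDc in eC.
  have eC' : p + m + 2 + (#|D| + #|~: D|) = 2 * #|qV Q| := eC.
  move: eC'; set v := #|qV Q| => eC'.
  clearbody v; lia.
case: hg => hconn [h0 h1 h2 h3 [n [n0 h4]]].
split; last split.
- have edge : forall b, b \notin D -> @qadj (qremove D) (qs b) (qt b) && @qadj (qremove D) (qt b) (qs b).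
    move=> b bD; apply/andP; split; apply/existsP; exists (exist _ b bD); by rewrite /= !eqxx ?orbT.
  have qsym : connect_sym (@qadj (qremove D)).
    apply: sym_connect_sym => u v; rewrite /qadj; apply/existsP/existsP => [[a ha]|[a ha]];
    by exists a; rewrite orbC.
  have arc : forall a : qA Q, connect (@qadj (qremove D)) (@qs Q a) (@qt Q a).
    move=> a; case: (boolP (a \in D)) => aD; last first.
      by apply: connect1; case/andP: (edge a aD).
    have aC := D_C hts aD.
    have ord := stepE1 hvs hf aC.
    have F3 : F sg ta (F sg ta (F sg ta a)) = a.
      by have := iter_order (F_inj hvs) a; rewrite ord.
    have uo := orbit_uniq (F sg ta) a.
    rewrite /orbit ord /= !inE andbT negb_or in uo.
    case/andP: uo => /andP [nab nac] nbc.
    have [ea bC] := F_C hvs aC.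
    have [eb cC] := F_C hvs bC.
    have [ec _] := F_C hvs cC; rewrite F3 in ec.
    have tri := proj1 hts a aD.
    have [x [[xD hx] hu]] := proj2 hts a tri.
    have ax : x = a := hu a (conj aD (rt_refl _ _ a)).
    have bD : F sg ta a \notin D.
      apply/negP => bD.
      have xb : x = F sg ta a := hu _ (conj bD (proj2 (PsiOrb_F hvs a _) (fconnect1 _ _))).
      by move: nab; rewrite -{1}ax xb eqxx.
    have cD : F sg ta (F sg ta a) \notin D.
      apply/negP => cD.
      have xc : x = F sg ta (F sg ta a) := hu _ (conj cD (proj2 (PsiOrb_F hvs a _) (fconnect_iter _ 2 a))).
      by move: nac; rewrite -{1}ax xc eqxx.
    move: ea eb ec; rewrite /iN /oN => [[ea _] [eb _] [ec _]].
    rewrite -ea ec.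
    apply: connect_trans (connect1 (proj2 (andP (edge _ bD)))) _.
    rewrite -eb; exact: connect1 (proj2 (andP (edge _ cD))).
  move=> x y; apply: connect_sub (hconn x y) => u v /existsP [a /orP [] /andP [/eqP su /eqP tv]].
    by rewrite -su -tv.
  by rewrite qsym -su -tv.
- by move=> a b /h0.
- move=> x; split; exact: (leq_trans (card_val_le _ _) (proj1 (h1 x))) ||
    exact: (leq_trans (card_val_le _ _) (proj2 (h1 x))).
- move=> a; split; first exact: (leq_trans (card_val_le _ _) (proj1 (h2 (val a)))).
  exact: (leq_trans (card_val_le _ _) (proj2 (h2 (val a)))).
- move=> a; split; first exact: (leq_trans (card_val_le _ _) (proj1 (h3 (val a)))).
  exact: (leq_trans (card_val_le _ _) (proj2 (h3 (val a)))).
- exists n; split => // w /andP [wn sw] szw.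
  apply: (path_decomp (r := @qR Q)); apply: h4 => //; last by rewrite size_map.
  rewrite /is_qpath; apply/andP; split; first by case: w wn {sw szw}.
  by rewrite sorted_map.
Qed.
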